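(* Let $\mathcal{T}$ be a planar triangulation, $m\in\mathbb{Z}_{\ge 0}$, $r\in\mathbb{Z}_{\ge -1}$, and $\mathbf{r}$ a smoothness distribution with $\mathbf{r}(\tau)\in\{r,-1\}$ for every interior edge $\tau$, such that $\mathcal{Q}^{\mathbf r}$ is lower-acyclic. Let $\sigma$ be a face bounded by interior edges $\tau_1,\tau_2,\tau_3$, and let $\gamma_i=\tau_i\cap\tau_{i+1}$ (indices cyclic in $1,2,3$) be interior vertices of $\mathcal{T}$. Assume that for all $i\in\{1,2,3\}$: $\mathbf{r}(\tau_i)=r$, and $\mathbf{r}(\tau)\neq -1$ for every edge $\tau$ incident on $\gamma_i$. Let $\ell_i$ be an affine-linear form vanishing on $\tau_i$, and let $$\phi:\bigoplus_{i=1}^3{\mathcal{P}}_m/\langle\ell_i^{r+1}\rangle\longrightarrow\bigoplus_{i=1}^3{\mathcal{P}}_m/\mathfrak{J}^{\mathbf r}_{\gamma_i},\qquad (a_1,a_2,a_3)\mapsto(-a_1+a_2,\,-a_2+a_3,\,a_1-a_3).$$ If the cokernel of $\phi$ is trivial, then $\mathcal{Q}^{\mathbf s}$ is lower-acyclic, where $\mathbf{s}(\tau)=\mathbf{r}(\tau)$ for interior edges $\tau\notin\{\tau_1,\tau_2,\tau_3\}$ and $\mathbf{s}(\tau_i)=-1$ for $i=1,2,3$.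
   Context: $\mathcal{T}$ is a finite planar mesh: a subdivision of a closed polygonal region $\Omega\subset\mathbb{R}^2$ (possibly not simply connected) into closed polygonal faces (here triangles) meeting along straight edges and vertices. An edge or vertex is interior if it is not contained in $\partial\Omega$; $\mathcal{T}^\circ_1,\mathcal{T}^\circ_0$ denote interior edges and interior vertices, $\mathcal{T}_2$ the faces. ${\mathcal{P}}_m$ is the space of real bivariate polynomials of total degree at most $m$; for polynomials $f_1,\dots,f_k$, $\langle f_1,\dots,f_k\rangle$ denotes the subspace of ${\mathcal{P}}_m$ of all polynomial combinations $\sum g_if_i$ lying in ${\mathcal{P}}_m$. A smoothness distribution is a map $\mathbf{r}:\mathcal{T}^\circ_1\to\mathbb{Z}_{\ge -1}$. For $\tau\in\mathcal{T}^\circ_1$ let $\ell_\tau$ be a nonzero affine-linear polynomial vanishing on $\tau$ and $\mathfrak{J}^{\mathbf r}_\tau=\langle \ell_\tau^{\mathbf r(\tau)+1}\rangle$ (equal to ${\mathcal{P}}_m$ if $\mathbf r(\tau)=-1$); for $\gamma\in\mathcal{T}^\circ_0$, $\mathfrak{J}^{\mathbf r}_\gamma=\sum_{\tau\ni\gamma}\mathfrak{J}^{\mathbf r}_\tau$ over interior edges containing $\gamma$. $\mathcal{C}$ is the chain complex $\bigoplus_{\sigma\in\mathcal{T}_2}{\mathcal{P}}_m\to\bigoplus_{\tau\in\mathcal{T}^\circ_1}{\mathcal{P}}_m\to\bigoplus_{\gamma\in\mathcal{T}^\circ_0}{\mathcal{P}}_m$ (degrees $2,1,0$) with the cellular boundary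 maps of $\mathcal{T}$ relative to $\partial\Omega$ (signs $\pm1$ from fixed orientations). $\mathcal{I}^{\mathbf r}$ is the subcomplex $0\to\bigoplus_{\tau}\mathfrak{J}^{\mathbf r}_\tau\to\bigoplus_{\gamma}\mathfrak{J}^{\mathbf r}_\gamma$ and $\mathcal{Q}^{\mathbf r}=\mathcal{C}/\mathcal{I}^{\mathbf r}$; $H_2(\mathcal{Q}^{\mathbf r})$ is the space of piecewise polynomials in ${\mathcal{P}}_m$ that are $C^{\mathbf r(\tau)}$ across each interior edge $\tau$. $\mathcal{Q}^{\mathbf r}$ is lower-acyclic if $H_1(\mathcal{Q}^{\mathbf r})=H_0(\mathcal{Q}^{\mathbf r})=0$. *)

(* Defs.v *)
From HB Require Import structures.
From mathcomp Require Import all_boot all_order all_algebra.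
From mathcomp Require Import mpoly.
Set Implicit Arguments. Unset Strict Implicit. Unset Printing Implicit Defensive.
Import Order.TTheory GRing.Theory Num.Theory.
Local Open Scope ring_scope.

(* Vertices carry coordinates in the plane, edges are oriented pairs of
   vertices (tail, head), faces are triples of vertices (listed
   counterclockwise, see [planar_triangulation]). *)
Record mesh (R : realFieldType) := Mesh {
  nV : nat; nE : nat; nF : nat;
  vpos  : 'I_nV -> R * R;
  evert : 'I_nE -> 'I_nV * 'I_nV;
  fvert : 'I_nF -> 'I_nV * 'I_nV * 'I_nV
}.

Section Mesh.
Variables (R : realFieldType) (M : mesh R).

Definition etail (e : 'I_(nE M)) := (evert e).1.
Definition ehead (e : 'I_(nE M)) := (evert e).2.
Definition fv1 (f : 'I_(nF M)) := (fvert f).1.1.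
Definition fv2 (f : 'I_(nF M)) := (fvert f).1.2.
Definition fv3 (f : 'I_(nF M)) := (fvert f).2.

Definition edge_set (e : 'I_(nE M)) : {set 'I_(nV M)} := [set etail e; ehead e].
Definition face_set (f : 'I_(nF M)) : {set 'I_(nV M)} := [set fv1 f; fv2 f; fv3 f].

(* twice the signed area of the triangle p q s *)
Definition orient (p q s : R * R) : R :=
  (q.1 - p.1) * (s.2 - p.2) - (q.2 - p.2) * (s.1 - p.1).

Definition in_hull (A : {set 'I_(nV M)}) (x : R * R) : Prop :=
  exists w : 'I_(nV M) -> R,
    [/\ forall v, 0 <= w v, forall v, v \notin A -> w v = 0,
        \sum_v w v = 1,
        x.1 = \sum_v w v * (vpos v).1 & x.2 = \sum_v w v * (vpos v).2].

Definition face_has_edge (f : 'I_(nF M)) (e : 'I_(nE M)) : bool :=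
  edge_set e \subset face_set f.

(* Geometric validity: a finite subdivision of a closed polygonal region
   into nondegenerate (counterclockwise listed) triangles, meeting along
   common edges / vertices only. *)
Definition planar_triangulation : Prop :=
  (injective (@vpos _ M)) /\
  (forall e, etail e != ehead e) /\
  (forall e e', edge_set e = edge_set e' -> e = e') /\
  (forall f, 0 < orient (vpos (fv1 f)) (vpos (fv2 f)) (vpos (fv3 f))) /\
  (forall f, (exists e, edge_set e = [set fv1 f; fv2 f]) /\
             (exists e, edge_set e = [set fv2 f; fv3 f]) /\
             (exists e, edge_set e = [set fv3 f; fv1 f])) /\
  (forall e, exists f, face_has_edge f e) /\
  (forall v, exists e, v \in edge_set e) /\
  (injective face_set) /\
  (forall f g x, f != g -> in_hull (face_set f) x -> in_hull (face_set g) x ->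
        in_hull (face_set f :&: face_set g) x).

(* An edge is interior (not contained in the boundary of the region)
   iff it is shared by two faces; a vertex is interior iff it is not on
   any boundary edge (the boundary of the region is the union of the
   boundary edges). *)
Definition interior_edge (e : 'I_(nE M)) : bool :=
  (1 < #|[set f | face_has_edge f e]|)%N.
Definition interior_vertex (v : 'I_(nV M)) : bool :=
  [forall e, (v \in edge_set e) ==> interior_edge e].

Notation poly2 := {mpoly R[2]}.

(* p in P_m : total degree at most m (msize = 1 + total degree) *)
Definition inPm (m : nat) (p : poly2) : Prop := (msize p <= m.+1)%N.

Definition in_gen (m : nat) (f p : poly2) : Prop :=
  inPm m p /\ exists g : poly2, p = g * f.

Definition ell (e : 'I_(nE M)) : poly2 :=
  let: (xu, yu) := vpos (etail e) in
  let: (xv, yv) := vpos (ehead e) in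
  (yv - yu) *: ('X_(0 : 'I_2) - xu%:MP) - (xv - xu) *: ('X_(1 : 'I_2) - yu%:MP).

Definition pt (x : R * R) : 'I_2 -> R := fun i => if i == 0 :> nat then x.1 else x.2.

Definition affine_vanishing_on (p : poly2) (e : 'I_(nE M)) : Prop :=
  [/\ p != 0, (msize p <= 2)%N &
      forall t : R, 0 <= t <= 1 ->
        p.@[pt ((1 - t) * (vpos (etail e)).1 + t * (vpos (ehead e)).1,
                (1 - t) * (vpos (etail e)).2 + t * (vpos (ehead e)).2)] = 0].

Definition smoothness_distribution (rr : 'I_(nE M) -> int) : Prop :=
  forall e, interior_edge e -> -1 <= rr e.

Definition J_edge (m : nat) (rr : 'I_(nE M) -> int) (e : 'I_(nE M)) (p : poly2) : Prop :=
  in_gen m (ell e ^+ absz (rr e + 1)) p.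

Definition J_vert (m : nat) (rr : 'I_(nE M) -> int) (v : 'I_(nV M)) (p : poly2) : Prop :=
  exists q : 'I_(nE M) -> poly2,
    (forall e, interior_edge e -> v \in edge_set e -> J_edge m rr e (q e)) /\
    p = \sum_(e | interior_edge e && (v \in edge_set e)) q e.

Definition face_edge_sign (f : 'I_(nF M)) (e : 'I_(nE M)) : R :=
  let s := [:: (fv1 f, fv2 f); (fv2 f, fv3 f); (fv3 f, fv1 f)] in
  if (etail e, ehead e) \in s then 1
  else if (ehead e, etail e) \in s then -1 else 0.

Definition bd2 (c : 'I_(nF M) -> poly2) (e : 'I_(nE M)) : poly2 :=
  \sum_f face_edge_sign f e *: c f.

Definition edge_vert_sign (e : 'I_(nE M)) (v : 'I_(nV M)) : R :=
  (v == ehead e)%:R - (v == etail e)%:R.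

Definition bd1 (c : 'I_(nE M) -> poly2) (v : 'I_(nV M)) : poly2 :=
  \sum_(e | interior_edge e) edge_vert_sign e v *: c e.

(* H_1(Q^r) = 0, unfolded: every 1-chain whose boundary lies in the
   subcomplex I^r is, modulo I^r, a boundary. *)
Definition H1_vanishes (m : nat) (rr : 'I_(nE M) -> int) : Prop :=
  forall c1 : 'I_(nE M) -> poly2,
    (forall e, interior_edge e -> inPm m (c1 e)) ->
    (forall v, interior_vertex v -> J_vert m rr v (bd1 c1 v)) ->
    exists c2 : 'I_(nF M) -> poly2,
      (forall f, inPm m (c2 f)) /\
      (forall e, interior_edge e -> J_edge m rr e (c1 e - bd2 c2 e)).

(* H_0(Q^r) = 0, unfolded: every 0-chain is a boundary modulo I^r. *)
Definition H0_vanishes (m : nat) (rr : 'I_(nE M) -> int) : Prop :=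
  forall c0 : 'I_(nV M) -> poly2,
    (forall v, interior_vertex v -> inPm m (c0 v)) ->
    exists c1 : 'I_(nE M) -> poly2,
      (forall e, interior_edge e -> inPm m (c1 e)) /\
      (forall v, interior_vertex v -> J_vert m rr v (c0 v - bd1 c1 v)).

Definition lower_acyclic (m : nat) (rr : 'I_(nE M) -> int) : Prop :=
  H1_vanishes m rr /\ H0_vanishes m rr.

End Mesh.

(* Main.v *)
Require Import Defs.
From HB Require Import structures.
From mathcomp Require Import all_boot all_order all_algebra.
From mathcomp Require Import mpoly.
Import Order.TTheory GRing.Theory Num.Theory.
Local Open Scope ring_scope.

Section Helpers.
Variables (R : realFieldType) (M : mesh R) (m : nat).
Implicit Types (p q : {mpoly R[2]}).

Lemma inPm0 : inPm m (0 : {mpoly R[2]}).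
Proof. by rewrite /inPm msize0. Qed.

Lemma inPmD p q : inPm m p -> inPm m q -> inPm m (p + q).
Proof.
rewrite /inPm => hp hq; apply: leq_trans (msizeD_le _ _) _.
by rewrite geq_max hp hq.
Qed.

Lemma inPmN p : inPm m p -> inPm m (- p).
Proof. by rewrite /inPm msizeN. Qed.

Lemma inPmB p q : inPm m p -> inPm m q -> inPm m (p - q).
Proof. by move=> hp hq; apply: inPmD => //; apply: inPmN. Qed.

Lemma inPmZ (c : R) p : inPm m p -> inPm m (c *: p).
Proof. by rewrite /inPm => hp; apply: leq_trans (msizeZ_le _ _) hp. Qed.

Lemma inPm_sum (I : finType) (P : pred I) (F : I -> {mpoly R[2]}) :
  (forall i, P i -> inPm m (F i)) -> inPm m (\sum_(i | P i) F i).
Proof.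
move=> h; elim/big_ind: _ => //; [exact: inPm0 | exact: inPmD].
Qed.

Lemma bd1_inPm (c : 'I_(nE M) -> {mpoly R[2]}) v :
  (forall e, interior_edge e -> inPm m (c e)) -> inPm m (bd1 c v).
Proof. by move=> h; apply: inPm_sum => e he; apply: inPmZ; apply: h. Qed.

Lemma bd2_inPm (c : 'I_(nF M) -> {mpoly R[2]}) e :
  (forall f, inPm m (c f)) -> inPm m (bd2 c e).
Proof. by move=> h; apply: inPm_sum => f _; apply: inPmZ; apply: h. Qed.

Lemma bd1B (c d : 'I_(nE M) -> {mpoly R[2]}) v :
  bd1 (fun e => c e - d e) v = bd1 c v - bd1 d v.
Proof. by rewrite /bd1 -sumrB; apply: eq_bigr => e _; rewrite scalerBr. Qed.

Lemma bd1D (c d : 'I_(nE M) -> {mpoly R[2]}) v :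
  bd1 (fun e => c e + d e) v = bd1 c v + bd1 d v.
Proof. by rewrite /bd1 -big_split; apply: eq_bigr => e _; rewrite scalerDr. Qed.

Lemma bd1_delta (t : 'I_(nE M)) (X : {mpoly R[2]}) v :
  interior_edge t ->
  bd1 (fun e => if e == t then X else 0) v = edge_vert_sign t v *: X.
Proof.
move=> ht; rewrite /bd1 (bigD1 t) //= eqxx big1 ?addr0 // => e /andP[_ /negbTE ->].
by rewrite scaler0.
Qed.

Lemma sign_out (e : 'I_(nE M)) v : v \notin edge_set e -> edge_vert_sign e v = 0.
Proof.
rewrite /edge_set /edge_vert_sign !inE negb_or => /andP[/negbTE -> /negbTE ->].
by rewrite subrr.
Qed.

Ltac fin_sign hne := let h' := fresh in
  have h' := hne; rewrite eq_sym in h';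
  rewrite ?eqxx ?(negbTE hne) ?(negbTE h') /=;
  rewrite ?subr0 ?sub0r ?mulrNN ?mulr1 ?mul1r ?mulN1r ?mulrN1 ?opprK //.

Lemma sign_sq (e : 'I_(nE M)) v : etail e != ehead e -> v \in edge_set e ->
  edge_vert_sign e v * edge_vert_sign e v = 1.
Proof.
rewrite /edge_set /edge_vert_sign !inE => hne /orP[]/eqP ->; fin_sign hne.
Qed.

Lemma sign_opp (e : 'I_(nE M)) u v : etail e != ehead e -> u \in edge_set e ->
  v \in edge_set e -> u != v ->
  edge_vert_sign e u * edge_vert_sign e v = -1.
Proof.
rewrite /edge_set /edge_vert_sign !inE => hne /orP[]/eqP -> /orP[]/eqP -> //;
  rewrite ?eqxx //= => _; fin_sign hne.
Qed.

Lemma edge_two (e : 'I_(nE M)) x y v : x \in edge_set e -> y \in edge_set e ->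
  x != y -> v \in edge_set e -> (v == x) || (v == y).
Proof.
rewrite /edge_set !inE => /orP[]/eqP -> /orP[]/eqP -> //; rewrite ?eqxx // => _;
  by case/orP=> /eqP ->; rewrite eqxx ?orbT.
Qed.

End Helpers.
Arguments sign_out {R M e v}.
Arguments sign_sq {R M e v}.
Arguments sign_opp {R M e u v}.
Arguments edge_two {R M e x y v}.

Section Geo.
Variables (R : realFieldType) (M : mesh R).

Definition oth (e : 'I_(nE M)) a := if etail e == a then ehead e else etail e.

Lemma oth_in e a : oth e a \in edge_set e.
Proof. by rewrite /oth /edge_set; case: ifP; rewrite !inE eqxx ?orbT. Qed.

Lemma oth_ne {e a} : etail e != ehead e -> a \in edge_set e -> oth e a != a.
Proof.
rewrite /oth /edge_set !inE => hne; case: ifP => [/eqP <- _|hta]; first by rewrite eq_sym.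
by case/orP => /eqP ha; [rewrite ha eqxx in hta | rewrite ha].
Qed.

Lemma inter1 {e f : 'I_(nE M)} {g x} : edge_set e :&: edge_set f = [set g] ->
  x \in edge_set e -> x \in edge_set f -> x = g.
Proof.
move=> H hx hy; have: x \in edge_set e :&: edge_set f by rewrite inE hx hy.
by rewrite H inE => /eqP.
Qed.

Lemma no_common (HM : planar_triangulation M) sigma (t1 t2 t3 : 'I_(nE M)) g1 g2 g3 :
  [/\ face_has_edge sigma t1, face_has_edge sigma t2 & face_has_edge sigma t3] ->
  edge_set t1 :&: edge_set t2 = [set g1] ->
  edge_set t2 :&: edge_set t3 = [set g2] ->
  edge_set t3 :&: edge_set t1 = [set g3] ->
  forall a, a \in edge_set t1 -> a \in edge_set t2 -> a \in edge_set t3 -> False.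
Proof.
move=> [s1 s2 s3] Hg1 Hg2 Hg3 a a1 a2 a3.
have hne := HM.2.1.
have x1i := oth_in t1 a; have x2i := oth_in t2 a; have x3i := oth_in t3 a.
have x1n := oth_ne (hne t1) a1; have x2n := oth_ne (hne t2) a2; have x3n := oth_ne (hne t3) a3.
have dd : forall e f g, edge_set e :&: edge_set f = [set g] ->
    a \in edge_set e -> a \in edge_set f -> oth e a != a -> oth e a != oth f a.
  move=> e f g H ae af xn; apply/eqP => E.
  have := inter1 H (oth_in e a); rewrite E => /(_ (oth_in f a)) E1.
  by move: xn; rewrite E E1 (inter1 H ae af) eqxx.
have d12 := dd _ _ _ Hg1 a1 a2 x1n.
have d23 := dd _ _ _ Hg2 a2 a3 x2n.
have d31 := dd _ _ _ Hg3 a3 a1 x3n.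
have U : uniq [:: a; oth t1 a; oth t2 a; oth t3 a].
  rewrite /= !inE !negb_or !andbT.
  rewrite ![a == _]eq_sym x1n x2n x3n d12 /=.
  rewrite d23 andbT; by rewrite eq_sym.
have S : {subset [:: a; oth t1 a; oth t2 a; oth t3 a] <= [:: fv1 sigma; fv2 sigma; fv3 sigma]}.
  have sf : forall t x, face_has_edge sigma t -> x \in edge_set t ->
      [|| x == fv1 sigma, x == fv2 sigma | x == fv3 sigma].
    move=> t x /subsetP st /st; rewrite /face_set !inE.
    by rewrite orbA.
  move=> x; rewrite !inE => /orP[/eqP->|/orP[/eqP->|/orP[/eqP->|/eqP->]]].
  - exact: sf _ _ s1 a1.
  - exact: sf _ _ s1 x1i.
  - exact: sf _ _ s2 x2i.
  - exact: sf _ _ s3 x3i.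
by have := uniq_leq_size U S.
Qed.
End Geo.

Section JL.
Variables (R : realFieldType) (M : mesh R) (m : nat) (rr : 'I_(nE M) -> int)
  (s : seq 'I_(nE M)).
Let ss := fun e => if e \in s then -1 else rr e.

Lemma Jedge_up e p : J_edge m rr e p -> J_edge m ss e p.
Proof.
rewrite /J_edge /ss; case: ifP => // _ [hp _]; split => //; exists p.
by rewrite addNr expr0 mulr1.
Qed.

Lemma Jedge_full e p : e \in s -> inPm m p -> J_edge m ss e p.
Proof.
rewrite /J_edge /ss => -> hp; split => //; exists p.
by rewrite addNr expr0 mulr1.
Qed.

Lemma Jvert_up v p : J_vert m rr v p -> J_vert m ss v p.
Proof.
move=> [q [hq ->]]; exists q; split => // e he hv; exact: Jedge_up (hq e he hv).
Qed.

Lemma Jvert_down v p : (forall e, e \in s -> v \notin edge_set e) ->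
  J_vert m ss v p -> J_vert m rr v p.
Proof.
move=> H [q [hq ->]]; exists q; split => // e he hv; have := hq e he hv.
rewrite /J_edge /ss; case: ifP => // es.
by have := H e es; rewrite hv.
Qed.
End JL.

Theorem mainTheorem2 (R : realFieldType) (M : mesh R)
  (HM : planar_triangulation M) (m : nat) (r : int) (hr : -1 <= r)
  (rr : 'I_(nE M) -> int) (Hrr : smoothness_distribution rr)
  (Hvals : forall e, interior_edge e -> rr e = r \/ rr e = -1)
  (Hacyc : lower_acyclic m rr)
  (sigma : 'I_(nF M)) (t1 t2 t3 : 'I_(nE M)) (g1 g2 g3 : 'I_(nV M))
  (Hdist : uniq [:: t1; t2; t3])
  (Hsides : [/\ face_has_edge sigma t1, face_has_edge sigma t2 & face_has_edge sigma t3])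
  (Hint : [/\ interior_edge t1, interior_edge t2 & interior_edge t3])
  (Hg1 : edge_set t1 :&: edge_set t2 = [set g1])
  (Hg2 : edge_set t2 :&: edge_set t3 = [set g2])
  (Hg3 : edge_set t3 :&: edge_set t1 = [set g3])
  (Hgint : [/\ interior_vertex g1, interior_vertex g2 & interior_vertex g3])
  (Hr : [/\ rr t1 = r, rr t2 = r & rr t3 = r])
  (Hinc : forall e, interior_edge e ->
            (g1 \in edge_set e) || (g2 \in edge_set e) || (g3 \in edge_set e) ->
            rr e != -1)
  (l1 l2 l3 : {mpoly R[2]})
  (Hl : [/\ affine_vanishing_on l1 t1, affine_vanishing_on l2 t2
          & affine_vanishing_on l3 t3])
  (* coker(phi) = 0, where phi : (+)_i P_m/<l_i^(r+1)> -> (+)_i P_m/J^r_(g_i);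
     elements of the source are represented by a_i in P_m *)
  (Hcoker : forall b1 b2 b3 : {mpoly R[2]},
      inPm m b1 -> inPm m b2 -> inPm m b3 ->
      exists a1 a2 a3 : {mpoly R[2]},
        [/\ inPm m a1, inPm m a2 & inPm m a3] /\
        [/\ J_vert m rr g1 (b1 - (- a1 + a2)),
            J_vert m rr g2 (b2 - (- a2 + a3)) &
            J_vert m rr g3 (b3 - (a1 - a3))]) :
  lower_acyclic m
    (fun e => if e \in [:: t1; t2; t3] then -1 else rr e).
Proof.
move: Hacyc => [H1 H0]; split; last first.
  move=> c0 hc0; have [c1 [h1 h2]] := H0 c0 hc0; exists c1; split => // v hv.
  by apply: Jvert_up; apply: h2.
move=> c1 hc1 hJ.
have hne := HM.2.1.
have nc := @no_common R M HM sigma t1 t2 t3 g1 g2 g3 Hsides Hg1 Hg2 Hg3.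
have mem : forall (e f : 'I_(nE M)) g, edge_set e :&: edge_set f = [set g] ->
    g \in edge_set e /\ g \in edge_set f.
  move=> e f g H; have: g \in edge_set e :&: edge_set f by rewrite H set11.
  by rewrite inE => /andP[].
have [g1t1 g1t2] := mem _ _ _ Hg1.
have [g2t2 g2t3] := mem _ _ _ Hg2.
have [g3t3 g3t1] := mem _ _ _ Hg3.
have g1t3 : g1 \notin edge_set t3 by apply/negP => h; exact: nc g1 g1t1 g1t2 h.
have g2t1 : g2 \notin edge_set t1 by apply/negP => h; exact: nc g2 h g2t2 g2t3.
have g3t2 : g3 \notin edge_set t2 by apply/negP => h; exact: nc g3 g3t1 h g3t3.
have d12 : g1 != g2 by apply/eqP => E; move: g2t1; rewrite -E g1t1.
have d23 : g2 != g3 by apply/eqP => E; move: g3t2; rewrite -E g2t2.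
have d31 : g3 != g1 by apply/eqP => E; move: g1t3; rewrite -E g3t3.
have v1 : forall v, v \in edge_set t1 -> (v == g1) || (v == g3).
  by move=> v; apply: edge_two => //; rewrite eq_sym.
have v2 : forall v, v \in edge_set t2 -> (v == g1) || (v == g2).
  by move=> v; apply: edge_two.
have v3 : forall v, v \in edge_set t3 -> (v == g2) || (v == g3).
  by move=> v; apply: edge_two.
have [i1 i2 i3] := Hint.
have [gi1 gi2 gi3] := Hgint.
have hb1 : inPm m (bd1 c1 g1) by apply: bd1_inPm.
have hb2 : inPm m (bd1 c1 g2) by apply: bd1_inPm.
have hb3 : inPm m (bd1 c1 g3) by apply: bd1_inPm.
have [a1 [a2 [a3 [[ha1 ha2 ha3] [J1 J2 J3]]]]] := Hcoker _ _ _ hb1 hb2 hb3.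
pose eps1 := edge_vert_sign t1 g3.
pose eps2 := edge_vert_sign t2 g1.
pose eps3 := edge_vert_sign t3 g2.
pose d := fun e => ((if e == t1 then eps1 *: a1 else 0) + (if e == t2 then eps2 *: a2 else 0))
   + (if e == t3 then eps3 *: a3 else 0).
pose c1' := fun e => c1 e - d e.
have key : forall v, bd1 c1' v = bd1 c1 v -
   ((edge_vert_sign t1 v * eps1) *: a1 + (edge_vert_sign t2 v * eps2) *: a2
    + (edge_vert_sign t3 v * eps3) *: a3).
  by move=> v; rewrite /c1' bd1B /d !bd1D !bd1_delta // !scalerA.
have hne1 := hne t1; have hne2 := hne t2; have hne3 := hne t3.
have hc1' : forall e, interior_edge e -> inPm m (c1' e).
  move=> e he; apply: inPmB; first exact: hc1.
  rewrite /d; apply: inPmD; [apply: inPmD|];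
    case: ifP => _; by [apply: inPm0 | apply: inPmZ].
have hJ' : forall v, interior_vertex v -> J_vert m rr v (bd1 c1' v).
  move=> v hv; rewrite key.
  have [/eqP ->|n1] := boolP (v == g1).
    rewrite (sign_opp hne1 g1t1 g3t1) ?(eq_sym g1) // (sign_sq hne2 g1t2).
    by rewrite (sign_out g1t3) mul0r scaleN1r scale1r scale0r addr0.
  have [/eqP ->|n2] := boolP (v == g2).
    rewrite (sign_opp hne2 g2t2 g1t2) 1?eq_sym // (sign_out g2t1).
    by rewrite (sign_sq hne3 g2t3) mul0r scaleN1r scale1r scale0r add0r.
  have [/eqP ->|n3] := boolP (v == g3).
    rewrite (sign_sq hne1 g3t1) (sign_out g3t2) (sign_opp hne3 g3t3 g2t3) 1?eq_sym //.
    by rewrite mul0r scaleN1r scale1r scale0r addr0.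
  have o1 : v \notin edge_set t1 by apply/negP => /v1; rewrite (negbTE n1) (negbTE n3).
  have o2 : v \notin edge_set t2 by apply/negP => /v2; rewrite (negbTE n1) (negbTE n2).
  have o3 : v \notin edge_set t3 by apply/negP => /v3; rewrite (negbTE n2) (negbTE n3).
  rewrite !sign_out // !mul0r !scale0r !addr0 subr0.
  apply: (@Jvert_down R M m rr [:: t1; t2; t3]); last exact: hJ.
  by move=> e; rewrite !inE => /orP[/eqP->|/orP[/eqP->|/eqP->]]; [move: o1|move: o2|move: o3]; rewrite /edge_set !inE.
have [c2 [hc2 hJe]] := H1 c1' hc1' hJ'.
exists c2; split => // e he.
have [es|es] := boolP (e \in [:: t1; t2; t3]).
  apply: Jedge_full => //; apply: inPmB; [exact: hc1 | exact: bd2_inPm].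
apply: Jedge_up; have := hJe e he.
move: es; rewrite !inE !negb_or => /andP[/negbTE n1 /andP[/negbTE n2 /negbTE n3]].
by rewrite /c1' /d n1 n2 n3 !addr0 subr0.
Qed.
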